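(* Let $\mathcal F=(V,E)$ be a hypergraph with $|V|\ge2$ and $E\ne\emptyset$. Then $\mathcal F$ has an induced sub-hypergraph $\mathcal F'=(V',E')$ (i.e. $V'\subseteq V$ and $E'=\{e\in E:e\subseteq V'\}$) such that: (1) $|E'|/|V'|\ge|E|/|V|$; (2) every vertex $v\in V'$ has degree at least $\frac{|E'|}{2|V'|\log_2|V|}$ in $\mathcal F'$; (3) $|E'|>|E|/2$.
   Context: The degree of a vertex in a hypergraph is the number of edges containing it. *)

(* Defs.v *)
From mathcomp Require Import all_boot.
From Stdlib Require Import Reals.
Set Implicit Arguments. Unset Strict Implicit. Unset Printing Implicit Defensive.

Definition is_hypergraph (T : finType) (V : {set T}) (E : {set {set T}}) : Prop :=
  forall e, e \in E -> (e \subset V) /\ (e != set0).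

Definition induced_edges (T : finType) (E : {set {set T}}) (V' : {set T})
  : {set {set T}} := [set e in E | e \subset V'].

Definition degree (T : finType) (E : {set {set T}}) (v : T) : nat :=
  #|[set e in E | v \in e]|.

Definition log2 (x : R) : R := (ln x / ln 2)%R.

(* Main.v *)
Require Import Defs.
From mathcomp Require Import all_boot.
From Stdlib Require Import Reals.
From mathcomp Require Import zify.
From Stdlib Require Import Lra Classical.
Set Implicit Arguments. Unset Strict Implicit. Unset Printing Implicit Defensive.
Open Scope R_scope.
Fixpoint hs (k : nat) : R :=
  match k with O => 0 | k'.+1 => hs k' + (if k' == O then 0 else / INR k'.+1) end.

Fixpoint dd (L : R) (k : nat) : R :=
  match k with O => 1 | k'.+1 =>
    dd L k' * (if k' == O then 1 else 1 - / (2 * INR k'.+1 * L)) end.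

Lemma ln_le' x y : 0 < x -> x <= y -> ln x <= ln y.
Proof.
move=> hx hxy; case: (Rle_lt_or_eq_dec _ _ hxy) => h.
  by apply: Rlt_le; apply: ln_increasing.
by rewrite h; lra.
Qed.

Lemma ln2_lt1 : ln 2 < 1.
Proof.
have h := exp_ineq1 1 ltac:(lra).
rewrite -(ln_exp 1). apply: ln_increasing; lra.
Qed.

Lemma ln_step (k : nat) : (1 <= k)%nat -> / INR k.+1 <= ln (INR k.+1) - ln (INR k).
Proof.
move=> hk.
have hk0 : 0 < INR k by apply: lt_0_INR; apply/ltP.
rewrite S_INR in hk0 * .
set x := INR k in hk0 *.
have h := exp_ineq1_le (- / (x + 1)).
have e : x = (x + 1) * (x / (x + 1)) by field; lra.
have hq : 0 < x / (x + 1) by apply: Rdiv_lt_0_compat; lra.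
have : ln x = ln (x + 1) + ln (x / (x + 1)).
  by rewrite {1}e ln_mult //; lra.
have : ln (x / (x + 1)) <= ln (exp (- / (x + 1))).
  apply: ln_le' => //.
  have -> : x / (x + 1) = 1 + - / (x + 1) by field; lra.
  exact: h.
rewrite ln_exp. lra.
Qed.

Lemma hs_le_ln (k : nat) : (1 <= k)%nat -> hs k <= ln (INR k).
Proof.
elim: k => [//|k IH] _.
case: k IH => [|k] IH.
  by rewrite /= ln_1; lra.
have := IH isT.
have := ln_step (k := k.+1) isT.
rewrite [hs _]/= -/(hs k.+1) /=. lra.
Qed.

Section D.
Variable L : R.
Hypothesis hL : 1 <= L.

Lemma fac_bounds (k : nat) : 0 < (if k == O then 1 else 1 - / (2 * INR k.+1 * L)) <= 1.
Proof.
case: eqP => _; first lra.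
have h1 : 1 <= INR k.+1 by rewrite S_INR; have := pos_INR k; lra.
have h2 : 2 <= 2 * INR k.+1 * L by nra.
have h3 : 0 < / (2 * INR k.+1 * L) by apply: Rinv_0_lt_compat; lra.
have h4 : / (2 * INR k.+1 * L) <= / 2 by apply: Rinv_le_contravar; lra.
lra.
Qed.

Lemma dd_bounds (k : nat) : 0 < dd L k <= 1.
Proof.
elim: k => [|k IH] /=; first lra.
have := fac_bounds k. move: (if _ then _ else _) => f [? ?]; case: IH => ? ?; split; nra.
Qed.

Lemma dd_mono (k j : nat) : (1 <= k)%nat -> (k <= j)%nat -> dd L k * INR k <= dd L j * INR j.
Proof.
move=> hk; elim: j => [|j IH] hj; first by lia.
case: (leqP k j) => h; last first.
  have -> : k = j.+1 by lia. lra.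
have {}IH := IH h.
have hj0 : (j == O) = false by apply/eqP; lia.
rewrite /= hj0.
have hdp := dd_bounds j.
have h1 : 1 <= INR j.+1 by rewrite S_INR; have := pos_INR j; lra.
have -> : dd L j * (1 - / (2 * INR j.+1 * L)) * INR j.+1
        = dd L j * (INR j.+1 - / (2 * L)) by field; lra.
rewrite S_INR in h1 *.
have h4 : / (2 * L) <= 1.
  rewrite -Rinv_1. apply: Rinv_le_contravar; lra.
nra.
Qed.

Lemma dd_lb (k : nat) : 1 - hs k / (2 * L) <= dd L k.
Proof.
elim: k => [|k IH] /=; first lra.
case: eqP => [->|hk] /=; first lra.
have hf := fac_bounds k. move: hf; case: eqP => // _ hf.
have hp : 0 <= hs k.
  clear; elim: k => [|k IH]; first by simpl; lra.
  rewrite [hs _.+1]/hs -/hs.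
  case: eqP => _; first lra.
  have : 0 < / INR k.+1 by apply: Rinv_0_lt_compat; apply: lt_0_INR; lia.
  lra.
have hi : 0 < INR k.+1 by apply: lt_0_INR; lia.
have -> : / (2 * INR k.+1 * L) = / INR k.+1 / (2 * L) by field; lra.
have -> : (hs k + / INR k.+1) / (2 * L) = hs k / (2 * L) + / INR k.+1 / (2 * L) by field; lra.
have ha : 0 <= / INR k.+1 / (2 * L).
  apply: Rle_mult_inv_pos; [apply: Rlt_le; exact: Rinv_0_lt_compat | lra].
have hb : 0 <= hs k / (2 * L) by apply: Rle_mult_inv_pos; lra.
have : / INR k.+1 / (2 * L) = / (2 * INR k.+1 * L) by field; lra.
nra.
Qed.
End D.
Section Comb.
Variable T : finType.
Variables (V : {set T}) (E : {set {set T}}).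
Hypothesis hyp : is_hypergraph V E.
Variable L : R.
Hypothesis hL : 1 <= L.

Definition psi (W : {set T}) := INR #|induced_edges E W| * dd L #|W|.
Definition good (W : {set T}) := forall v, v \in W ->
  INR (degree (induced_edges E W) v) >= INR #|induced_edges E W| / (2 * INR #|W| * L).

Lemma removal (W : {set T}) v : v \in W ->
  induced_edges E (W :\ v) = induced_edges E W :\: [set e in induced_edges E W | v \in e].
Proof.
move=> hv; apply/setP => e.
rewrite /induced_edges !inE subsetD1.
by case: (e \in E); case: (e \subset W); case: (v \in e).
Qed.

Lemma card_removal (W : {set T}) v : v \in W ->
  #|induced_edges E (W :\ v)| = (#|induced_edges E W| - degree (induced_edges E W) v)%nat
  /\ (degree (induced_edges E W) v <= #|induced_edges E W|)%nat.
Proof.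
move=> hv; rewrite removal // cardsD /degree.
have hs : [set e in induced_edges E W | v \in e] \subset induced_edges E W.
  by apply/subsetP => e; rewrite inE => /andP [].
by rewrite (setIidPr hs); split => //; apply: subset_leq_card.
Qed.

Lemma singleton_deg (W : {set T}) v : v \in W -> #|W| = 1%nat ->
  degree (induced_edges E W) v = #|induced_edges E W|.
Proof.
move=> hv h1; rewrite /degree.
suff -> : [set e in induced_edges E W | v \in e] = induced_edges E W by [].
apply/setP => e; rewrite inE.
case he: (e \in induced_edges E W) => //=.
move: he; rewrite /induced_edges inE => /andP [heE heW].
have [_ hne] := hyp heE.
have /cards1P [x hx] : #|W| == 1%nat by apply/eqP.
move: hv heW; rewrite hx inE => /eqP -> heW.
case/set0Pn: hne => y hy.
have := subsetP heW y hy; rewrite inE => /eqP <-; exact hy.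
Qed.

Lemma descend k : forall W : {set T}, #|W| = k -> W \subset V -> psi V <= psi W ->
  exists W' : {set T}, W' \subset V /\ psi V <= psi W' /\ good W'.
Proof.
elim: k => [|k IH] W hk hWV hpsi.
  exists W; split => //; split => // v hv.
  by move: hk; rewrite (cardD1 v) hv.
destruct (classic (exists v, v \in W /\
   INR (degree (induced_edges E W) v) < INR #|induced_edges E W| / (2 * INR #|W| * L)))
  as [[v [hv hlt]] | hno]; last first.
  exists W; split => //; split => // v hv.
  apply: Rnot_lt_ge => hlt; apply: hno; exists v; split; [exact: hv | exact: hlt].
case: k IH hk => [|k] IH hk.
  exfalso; move: hlt; rewrite singleton_deg // hk.
  have := pos_INR #|induced_edges E W|.
  set m := INR _ => hm.
  have -> : INR 1 = 1 by [].
  have : m / (2 * 1 * L) <= m.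
    have -> : m / (2 * 1 * L) = m * / (2 * L) by field; lra.
    have : / (2 * L) <= 1 by rewrite -Rinv_1; apply: Rinv_le_contravar; lra.
    have : 0 < / (2 * L) by apply: Rinv_0_lt_compat; lra.
    nra.
  lra.
apply: (IH (W :\ v)).
- by move: hk; rewrite (cardsD1 v W) hv add1n => -[].
- by apply: subset_trans hWV; apply: subsetDl.
apply: (Rle_trans _ _ _ hpsi).
have hc : #|W :\ v| = k.+1 by move: hk; rewrite (cardsD1 v W) hv add1n => -[].
have [hm hdeg] := card_removal hv.
rewrite /psi hm hc hk minus_INR; last by apply/leP.
rewrite [dd L k.+2]/dd -/(dd L k.+1).
move: hlt; rewrite hk.
set m := INR #|induced_edges E W|.
set d := INR (degree _ _).
have hD := dd_bounds hL k.+1.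
set D := dd L k.+1 in hD *.
have hK : 1 <= INR k.+2 by rewrite !S_INR; have := pos_INR k; lra.
have -> : m / (2 * INR k.+2 * L) = m * / (2 * INR k.+2 * L) by field; lra.
set a := / (2 * INR k.+2 * L).
rewrite /=.
move=> hlt.
have : 0 < (m * a - d) * D by apply: Rmult_lt_0_compat; lra.
nra.
Qed.
End Comb.

Close Scope R_scope.

Theorem lemma2p1 (T : finType) (V : {set T}) (E : {set {set T}}) :
  is_hypergraph V E ->
  (2 <= #|V|)%N ->
  E != set0 ->
  exists V' : {set T},
    let E' := induced_edges E V' in
    [/\ V' \subset V,
        (0 < #|V'|)%N,
        (INR #|E'| / INR #|V'| >= INR #|E| / INR #|V|)%R,
        (forall v, v \in V' ->
           (INR (degree E' v) >= INR #|E'| / (2 * INR #|V'| * log2 (INR #|V|)))%R)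
      & (INR #|E'| > INR #|E| / 2)%R].
Proof.
Open Scope R_scope.
move=> hyp hV hE.
set n := #|V|.
set L := log2 (INR n).
have hn2 : 2 <= INR n by have := le_INR 2 n ltac:(apply/leP; exact hV); rewrite /=; lra.
have hln2 : 0 < ln 2 by have := ln_lt_2; lra.
have hlnn : ln 2 <= ln (INR n) by apply: ln_le'; lra.
have hL : 1 <= L.
  rewrite /L /log2.
  apply: (Rmult_le_reg_r (ln 2)) => //.
  rewrite Rmult_1_l /Rdiv Rmult_assoc Rinv_l; lra.
have hEV : induced_edges E V = E.
  apply/setP => e; rewrite /induced_edges inE.
  case he: (e \in E) => //=; by case: (hyp e he).
have [W [hWV [hpsi hgood]]] := descend hyp hL (erefl #|V|) (subxx V) (Rle_refl _).
exists W; rewrite /=.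
move: hpsi; rewrite /psi hEV -/n.
set m := #|E|.
set m' := #|induced_edges E W|.
set n' := #|W|.
move=> hpsi.
have hm : (0 < m)%nat by rewrite /m card_gt0.
have hmR : 0 < INR m by apply: lt_0_INR; apply/ltP.
have hD := dd_bounds hL n.
have hD' := dd_bounds hL n'.
have hm'R : 0 < INR m'.
  have h0 := pos_INR m'.
  case: (Rle_lt_or_eq_dec _ _ h0) => // h.
  move: hpsi; rewrite -h. nra.
have hm' : (0 < m')%nat by apply/ltP; apply: INR_lt; rewrite /=; lra.
have hn' : (0 < n')%nat.
  move: hm'; rewrite /m' card_gt0 => /set0Pn [e].
  rewrite /induced_edges inE => /andP [heE heW].
  have [_ hne] := hyp e heE.
  case/set0Pn: hne => x hx.
  rewrite /n' card_gt0; apply/set0Pn; exists x; exact: (subsetP heW x hx).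
have hn'n : (n' <= n)%nat by apply: subset_leq_card.
have hn'R : 1 <= INR n' by have := le_INR 1 n' ltac:(apply/leP; exact hn'); rewrite /=; lra.
split => //.
-
  have hmono := dd_mono hL hn' hn'n.
  set D := dd L n in hD hmono hpsi *.
  set D' := dd L n' in hD' hmono hpsi *.
  have key : INR m * INR n' <= INR m' * INR n.
    apply: (Rmult_le_reg_r D'); first lra.
    have h1 : INR m * D * INR n <= INR m' * D' * INR n by nra.
    have h2 : INR m * (D' * INR n') <= INR m * (D * INR n) by nra.
    nra.
  apply: Rle_ge.
  have -> : INR m' / INR n' = INR m' * INR n / (INR n * INR n') by field; lra.
  have -> : INR m / INR n = INR m * INR n' / (INR n * INR n') by field; lra.
  apply: Rmult_le_compat_r => //.
  apply: Rlt_le; apply: Rinv_0_lt_compat; nra.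
-
  have hlb := dd_lb hL n.
  have hhs := hs_le_ln (k := n) ltac:(apply/leP; lia).
  have e1 : ln (INR n) / (2 * L) = ln 2 / 2.
    rewrite /L /log2; field; lra.
  have hhs2 : hs n / (2 * L) <= ln (INR n) / (2 * L).
    apply: Rmult_le_compat_r => //; apply: Rlt_le; apply: Rinv_0_lt_compat; lra.
  have := ln2_lt1.
  set D := dd L n in hD hlb hpsi *.
  set D' := dd L n' in hD' hpsi *.
  move=> hl2.
  have hD2 : 1 / 2 < D by lra.
  have : INR m' * D' <= INR m' by nra.
  move=> h1; apply: Rlt_gt.
  nra.
Qed.
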